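(* Let $\alpha$ be a badly approximable real number, i.e. $\inf_{q\ge1} q\,\|q\alpha\|>0$. There exists a constant $C(\alpha)>0$ such that for every integer $q\ge2$, $$\sum_{x=q}^{q^3}\frac{1}{\|\alpha x\|\,x\,(\log_2 x)^2}\le C(\alpha).$$
   Context: For a real number $x$, $\|x\|$ denotes the distance from $x$ to the nearest integer; $\log_2$ denotes the logarithm in base $2$. *)

(* Defs.v *)
From Stdlib Require Import Reals.
Open Scope R_scope.

Definition dist_nint (x : R) : R := Rmin (frac_part x) (1 - frac_part x).

Definition log2 (x : R) : R := ln x / ln 2.

Definition badly_approximable (alpha : R) : Prop :=
  exists c : R, 0 < c /\ forall q : nat, (1 <= q)%nat -> c <= INR q * dist_nint (INR q * alpha).

(* Main.v *)
Require Import Defs.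
From Stdlib Require Import Reals Lra Lia ZArith.
Open Scope R_scope.

Fixpoint sumR (f : nat -> R) (n : nat) : R :=
  match n with O => 0 | S n => sumR f n + f n end.

Lemma sumR_ext f g n : (forall i, (i < n)%nat -> f i = g i) -> sumR f n = sumR g n.
Proof. induction n; simpl; intros H; auto. rewrite IHn by (intros; apply H; lia). rewrite H by lia; auto. Qed.

Lemma sumR_le f g n : (forall i, (i < n)%nat -> f i <= g i) -> sumR f n <= sumR g n.
Proof. induction n; simpl; intros H; [lra|]. assert (sumR f n <= sumR g n) by (apply IHn; intros; apply H; lia). assert (f n <= g n) by (apply H; lia). lra. Qed.

Lemma sumR_nonneg f n : (forall i, (i < n)%nat -> 0 <= f i) -> 0 <= sumR f n.
Proof. intros H. replace 0 with (sumR (fun _ => 0) n). apply sumR_le; auto. induction n; simpl; auto; rewrite IHn; [lra| intros; apply H; lia]. Qed.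

Lemma sumR_zero f n : (forall i, (i < n)%nat -> f i = 0) -> sumR f n = 0.
Proof. induction n; simpl; intros H; auto. rewrite IHn by (intros; apply H; lia). rewrite H by lia; lra. Qed.

Lemma sumR_plus f g n : sumR (fun i => f i + g i) n = sumR f n + sumR g n.
Proof. induction n; simpl; [lra|]. rewrite IHn; lra. Qed.

Lemma sumR_scal f a n : sumR (fun i => a * f i) n = a * sumR f n.
Proof. induction n; simpl; [lra|]. rewrite IHn; lra. Qed.

Lemma sumR_const a n : sumR (fun _ => a) n = INR n * a.
Proof. induction n; simpl sumR; [simpl; lra|]. rewrite IHn, S_INR; lra. Qed.

Lemma sumR_split f a b : sumR f (a + b) = sumR f a + sumR (fun i => f (a + i)%nat) b.
Proof. induction b; simpl. rewrite Nat.add_0_r; lra. rewrite Nat.add_succ_r; simpl. rewrite IHb; lra. Qed.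

Lemma sumR_exchange (a : nat -> nat -> R) n m :
  sumR (fun i => sumR (fun j => a i j) m) n = sumR (fun j => sumR (fun i => a i j) n) m.
Proof. induction n; simpl. symmetry; apply sumR_zero; auto. rewrite IHn, <- sumR_plus; auto. Qed.

Lemma sumR_f_R0 f m : sum_f_R0 f m = sumR f (S m).
Proof. induction m; simpl; auto. lra. simpl in IHm. rewrite IHm; auto. Qed.

Lemma sumR_delta (F : nat -> R) a m : (a < m)%nat ->
  sumR (fun j => if Nat.eq_dec a j then F j else 0) m = F a.
Proof. induction m; intros H; [lia|]. simpl. destruct (Nat.eq_dec a m).
  subst. rewrite sumR_zero. lra. intros i Hi. destruct (Nat.eq_dec m i); [lia|auto].
  rewrite IHm by lia. lra. Qed.

Lemma count_le (F : nat -> R) (g : nat -> nat) j n : 0 <= F j ->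
  (forall i i', (i < n)%nat -> (i' < n)%nat -> g i = g i' -> i = i') ->
  sumR (fun i => if Nat.eq_dec (g i) j then F j else 0) n <= F j.
Proof. intros HF; induction n; simpl; intros Hi; [lra|].
  destruct (Nat.eq_dec (g n) j).
  - rewrite sumR_zero. lra. intros i Hin. destruct (Nat.eq_dec (g i) j); auto.
    assert (i = n) by (apply Hi; lia). lia.
  - assert (sumR (fun i => if Nat.eq_dec (g i) j then F j else 0) n <= F j) by (apply IHn; intros; apply Hi; lia). lra. Qed.

Lemma inj_sum (F : nat -> R) (g : nat -> nat) n M :
  (forall j, 0 <= F j) -> (forall i, (i < n)%nat -> (g i <= M)%nat) ->
  (forall i i', (i < n)%nat -> (i' < n)%nat -> g i = g i' -> i = i') ->
  sumR (fun i => F (g i)) n <= sumR F (S M).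
Proof. intros HF Hg Hi.
  rewrite (sumR_ext _ (fun i => sumR (fun j => if Nat.eq_dec (g i) j then F j else 0) (S M))).
  rewrite sumR_exchange. apply sumR_le. intros j _. apply count_le; auto.
  intros i Hin. rewrite sumR_delta; auto. specialize (Hg i Hin); lia. Qed.

Lemma harmonic p : sumR (fun j => / INR j) (S (2 ^ p)) <= INR p + 1.
Proof. induction p.
  - simpl. rewrite Rinv_0, Rinv_1. lra.
  - replace (S (2 ^ S p)) with (S (2 ^ p) + 2 ^ p)%nat by (simpl; lia).
    rewrite sumR_split, S_INR.
    assert (sumR (fun i => / INR (S (2 ^ p) + i)) (2 ^ p) <= sumR (fun _ => / INR (2^p)) (2^p)).
    { apply sumR_le. intros i _. apply Rinv_le_contravar. apply lt_0_INR. apply Nat.neq_0_lt_0, Nat.pow_nonzero; lia.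
      apply le_INR; lia. }
    rewrite sumR_const in H. rewrite Rinv_r in H. lra. apply not_0_INR, Nat.pow_nonzero; lia.
Qed.

Lemma dist_repr t : exists m : Z, dist_nint t = Rabs (t - IZR m).
Proof. unfold dist_nint, frac_part. destruct (base_Int_part t) as [H1 H2].
  unfold Rmin. destruct (Rle_dec _ _).
  - exists (Int_part t). rewrite Rabs_right; lra.
  - exists (Int_part t + 1)%Z. rewrite plus_IZR. rewrite Rabs_left; lra. Qed.

Lemma dist_le t (m : Z) : dist_nint t <= Rabs (t - IZR m).
Proof. unfold dist_nint, frac_part. destruct (base_Int_part t) as [H1 H2].
  destruct (Z_le_gt_dec m (Int_part t)) as [H|H].
  - apply IZR_le in H. eapply Rle_trans. apply Rmin_l. rewrite Rabs_right; lra.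
  - assert (IZR (Int_part t) + 1 <= IZR m). rewrite <- plus_IZR. apply IZR_le; lia.
    eapply Rle_trans. apply Rmin_r. rewrite Rabs_left; lra. Qed.

Lemma dist_nonneg t : 0 <= dist_nint t.
Proof. destruct (dist_repr t) as [m ->]. apply Rabs_pos. Qed.

Lemma abs_abs_diff a b : Rabs (Rabs a - Rabs b) = Rabs (a - b) \/ Rabs (Rabs a - Rabs b) = Rabs (a + b).
Proof. unfold Rabs; repeat destruct Rcase_abs; lra. Qed.

Lemma dist_sep alpha (x y : nat) : (y <= x)%nat ->
  Rmin (dist_nint (INR (x - y) * alpha)) (dist_nint (INR (x + y) * alpha))
  <= Rabs (dist_nint (alpha * INR x) - dist_nint (alpha * INR y)).
Proof. intros Hxy.
  destruct (dist_repr (alpha * INR x)) as [nx ->].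
  destruct (dist_repr (alpha * INR y)) as [ny ->].
  destruct (abs_abs_diff (alpha * INR x - IZR nx) (alpha * INR y - IZR ny)) as [E|E]; rewrite E.
  - eapply Rle_trans. apply Rmin_l. rewrite minus_INR by auto.
    replace (alpha * INR x - IZR nx - (alpha * INR y - IZR ny)) with ((INR x - INR y) * alpha - IZR (nx - ny)) by (rewrite minus_IZR; ring).
    apply dist_le.
  - eapply Rle_trans. apply Rmin_r. rewrite plus_INR.
    replace (alpha * INR x - IZR nx + (alpha * INR y - IZR ny)) with ((INR x + INR y) * alpha - IZR (nx + ny)) by (rewrite plus_IZR; ring).
    apply dist_le.
Qed.

Lemma my_le_div a b x : 0 < b -> a <= x * b -> a / b <= x.
Proof. intros Hb H. unfold Rdiv. apply Rmult_le_reg_r with b; auto. rewrite Rmult_assoc, Rinv_l; lra. Qed.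
Lemma my_div_le a b x : 0 < b -> x * b <= a -> x <= a / b.
Proof. intros Hb H. unfold Rdiv. apply Rmult_le_reg_r with b; auto. rewrite Rmult_assoc, Rinv_l; lra. Qed.
Lemma my_div_lt_inv a b x : 0 < b -> a / b < x -> a < x * b.
Proof. intros Hb H. unfold Rdiv in H. apply Rmult_lt_compat_r with (r := b) in H; auto. rewrite Rmult_assoc, Rinv_l in H; lra. Qed.
Lemma my_div_ge_inv a b x : 0 < b -> x <= a / b -> x * b <= a.
Proof. intros Hb H. unfold Rdiv in H. apply Rmult_le_compat_r with (r := b) in H; [|lra]. rewrite Rmult_assoc, Rinv_l in H; lra. Qed.

Lemma dist_half t : dist_nint t <= 1/2.
Proof. unfold dist_nint, Rmin. destruct Rle_dec; lra. Qed.

Lemma block_inv alpha c (Hc : 0 < c)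
  (Hb : forall q : nat, (1 <= q)%nat -> c <= INR q * dist_nint (INR q * alpha))
  (k p : nat) (Hp : 2 / c <= INR (2 ^ p)) :
  sumR (fun i => / dist_nint (alpha * INR (2 ^ k + i))) (2 ^ k)
   <= (4 * INR (2 ^ k) / c) * (INR (k + p) + 1).
Proof.
  set (N := INR (2 ^ k)).
  assert (HN : 1 <= N). { unfold N. rewrite pow_INR. simpl. apply pow_R1_Rle. lra. }
  set (w := c / (4 * N)).
  assert (Hw : 0 < w). { unfold w. apply Rdiv_lt_0_compat; lra. }
  set (v := fun i : nat => dist_nint (alpha * INR (2 ^ k + i))).
  assert (lowb : forall n : nat, (1 <= n)%nat -> INR n <= 4 * N -> w <= dist_nint (INR n * alpha)).
  { intros n Hn HnN. specialize (Hb n Hn). pose proof (dist_nonneg (INR n * alpha)).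
    unfold w. apply my_le_div. lra. nra. }
  assert (F1 : forall i, (i < 2 ^ k)%nat -> 2 * w <= v i).
  { intros i Hi. unfold v. rewrite (Rmult_comm alpha).
    assert (H1 := Hb (2 ^ k + i)%nat ltac:(pose proof (Nat.pow_nonzero 2 k); lia)).
    assert (INR (2^k + i) <= 2 * N). { rewrite plus_INR. assert (INR i <= N) by (unfold N; apply le_INR; lia). unfold N in *. lra. }
    pose proof (dist_nonneg (INR (2 ^ k + i) * alpha)).
    unfold w. replace (2 * (c / (4 * N))) with (c / (2 * N)) by (field; lra).
    apply my_le_div. lra. nra. }
  assert (F2 : forall i i', (i' < i < 2 ^ k)%nat -> w <= Rabs (v i - v i')).
  { intros i i' H. unfold v. eapply Rle_trans; [|apply dist_sep; lia].
    apply Rmin_glb; apply lowb; try lia.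
    - apply Rle_trans with N. unfold N. apply le_INR; lia. lra.
    - unfold N. replace (4 * INR (2^k)) with (INR (4 * 2^k)) by (rewrite mult_INR; simpl; ring). apply le_INR; lia. }
  set (j := fun i => Z.to_nat (Int_part (v i / w))).
  assert (Fj : forall i, (i < 2 ^ k)%nat -> INR (j i) <= v i / w < INR (j i) + 1 /\ 1 <= INR (j i)).
  { intros i Hi. destruct (base_Int_part (v i / w)) as [A B].
    assert (2 <= v i / w). { apply my_div_le; auto. }
    assert (0 <= Int_part (v i / w))%Z. { apply le_IZR. apply Rnot_lt_le. intro C. 
       assert (IZR (Int_part (v i / w)) <= -1). { replace (-1) with (IZR (-1)) by auto. apply IZR_le.
         apply lt_IZR in C. lia. } lra. }
    unfold j. rewrite INR_IZR_INZ, Z2Nat.id by auto.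
    assert (1 <= IZR (Int_part (v i / w))). { apply IZR_le. assert (0 < IZR (Int_part (v i / w))) by lra.
       apply lt_IZR in H1. lia. }
    lra. }
  set (M := (2 ^ (k + p))%nat).
  assert (HM : forall i, (i < 2 ^ k)%nat -> (j i <= M)%nat).
  { intros i Hi. apply INR_le. destruct (Fj i Hi) as [[A _] _].
    apply Rle_trans with (v i / w); auto. 
    assert (v i <= 1/2) by apply dist_half.
    apply Rle_trans with ((1/2) / w). apply Rmult_le_compat_r; auto. left; apply Rinv_0_lt_compat; auto.
    unfold M, w. rewrite pow_INR, pow_add, <- !pow_INR. fold N.
    replace (1 / 2 / (c / (4 * N))) with (N * (2 / c)) by (field; lra).
    apply Rmult_le_compat_l; lra. }
  assert (Hinj : forall i i', (i < 2 ^ k)%nat -> (i' < 2 ^ k)%nat -> j i = j i' -> i = i').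
  { intros i i' Hi Hi' E. destruct (Nat.lt_total i i') as [L|[L|L]]; auto; exfalso.
    - specialize (F2 i' i ltac:(lia)). destruct (Fj i Hi) as [[A B] _]. destruct (Fj i' Hi') as [[A' B'] _].
      rewrite E in A, B. assert (Rabs (v i' / w - v i / w) < 1) by (apply Rabs_def1; lra).
      replace (v i' / w - v i / w) with ((v i' - v i) / w) in H by (field; lra).
      unfold Rdiv in H; rewrite Rabs_mult, Rabs_inv, (Rabs_right w) in H by lra. apply my_div_lt_inv in H; lra.
    - specialize (F2 i i' ltac:(lia)). destruct (Fj i Hi) as [[A B] _]. destruct (Fj i' Hi') as [[A' B'] _].
      rewrite E in A, B. assert (Rabs (v i / w - v i' / w) < 1) by (apply Rabs_def1; lra).
      replace (v i / w - v i' / w) with ((v i - v i') / w) in H by (field; lra).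
      unfold Rdiv in H; rewrite Rabs_mult, Rabs_inv, (Rabs_right w) in H by lra. apply my_div_lt_inv in H; lra. }
  apply Rle_trans with (sumR (fun i => / w * / INR (j i)) (2 ^ k)).
  { apply sumR_le. intros i Hi. fold (v i). destruct (Fj i Hi) as [[A _] B].
    rewrite <- Rinv_mult. apply Rinv_le_contravar. nra. apply my_div_ge_inv in A; auto. lra. }
  rewrite sumR_scal.
  assert (sumR (fun i => / INR (j i)) (2 ^ k) <= INR (k + p) + 1).
  { eapply Rle_trans. apply (inj_sum (fun x => / INR x) j (2 ^ k) M); auto.
    intros x. destruct x. simpl; rewrite Rinv_0; lra. left; apply Rinv_0_lt_compat, lt_0_INR; lia.
    apply harmonic. }
  replace (4 * N / c) with (/ w) by (unfold w; field; lra).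
  apply Rmult_le_compat_l; auto. left; apply Rinv_0_lt_compat; auto.
Qed.

Lemma inv_nonneg r : 0 <= r -> 0 <= / r.
Proof. intros [H|H]. left; apply Rinv_0_lt_compat; auto. subst; rewrite Rinv_0; lra. Qed.

Lemma sub_range (f : nat -> R) a b n m : (a <= b)%nat -> (b + n <= a + m)%nat ->
  (forall i, (i < m)%nat -> 0 <= f (a + i)%nat) ->
  sumR (fun i => f (b + i)%nat) n <= sumR (fun i => f (a + i)%nat) m.
Proof. intros H1 H2 Hf.
  replace m with ((b - a) + n + (m - (b - a) - n))%nat by lia.
  rewrite !sumR_split.
  assert (0 <= sumR (fun i => f (a + i)%nat) (b - a)) by (apply sumR_nonneg; intros; apply Hf; lia).
  assert (0 <= sumR (fun i => f (a + (b - a + n + i))%nat) (m - (b - a) - n)) by (apply sumR_nonneg; intros; apply Hf; lia).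
  rewrite (sumR_ext (fun i => f (a + (b - a + i))%nat) (fun i => f (b + i)%nat)) by (intros; f_equal; lia).
  lra. Qed.

Lemma dyadic (f : nat -> R) K t :
  sumR (fun i => f (2 ^ K + i)%nat) (2 ^ (K + t) - 2 ^ K) =
  sumR (fun s => sumR (fun i => f (2 ^ (K + s) + i)%nat) (2 ^ (K + s))) t.
Proof. induction t.
  - rewrite Nat.add_0_r, Nat.sub_diag. simpl; auto.
  - assert (2 ^ K <= 2 ^ (K + t))%nat by (apply Nat.pow_le_mono_r; lia).
    replace (2 ^ (K + S t) - 2 ^ K)%nat with ((2 ^ (K + t) - 2 ^ K) + 2 ^ (K + t))%nat
      by (rewrite Nat.add_succ_r; simpl; lia).
    rewrite sumR_split, IHt. change (sumR ?g (S t)) with (sumR g t + g t). f_equal. apply sumR_ext. intros; f_equal; lia. Qed.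

Lemma log2_ge (x : R) (k : nat) : INR (2 ^ k) <= x -> INR k <= log2 x.
Proof. intros H. unfold log2. assert (0 < ln 2) by (rewrite <- ln_1; apply ln_increasing; lra).
  apply my_div_le; auto. rewrite <- (ln_pow 2) by lra.
  assert (E : INR (2 ^ k) = 2 ^ k) by (rewrite pow_INR; simpl; f_equal; ring). rewrite <- E.
  assert (0 < INR (2 ^ k)) by (apply lt_0_INR, Nat.neq_0_lt_0, Nat.pow_nonzero; lia).
  destruct H as [H|H]. left; apply ln_increasing; auto. rewrite H; lra. Qed.

Theorem lemma2 (alpha : R) (Halpha : badly_approximable alpha) :
  exists C : R, 0 < C /\
    forall q : nat, (2 <= q)%nat ->
      sum_f q (q ^ 3)%nat
        (fun x : nat => / (dist_nint (alpha * INR x) * INR x * (log2 (INR x)) ^ 2))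
      <= C.
Proof.
  destruct Halpha as [c [Hc Hb]].
  destruct (INR_archimed 1 (2 / c)) as [p0 Hp0]; [lra|].
  rename p0 into p.
  assert (Hp : 2 / c <= INR (2 ^ p)).
  { rewrite pow_INR. apply Rle_trans with (INR p). lra.
    replace (INR 2) with 2 by (simpl; ring). clear. induction p. simpl; lra. rewrite S_INR. change (2 ^ S p) with (2 * 2 ^ p). assert (1 <= 2 ^ p) by (apply pow_R1_Rle; lra). lra. }
  set (f := fun x : nat => / (dist_nint (alpha * INR x) * INR x * (log2 (INR x)) ^ 2)).
  set (B := 4 * (INR p + 2) / c).
  assert (HB : 0 < B) by (unfold B; apply Rdiv_lt_0_compat; [pose proof (pos_INR p)|]; lra).
  assert (fpos : forall x, (1 <= x)%nat -> 0 <= f x).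
  { intros x Hx. unfold f. apply inv_nonneg. apply Rmult_le_pos. apply Rmult_le_pos.
    apply dist_nonneg. apply pos_INR. apply pow2_ge_0. }
  assert (block : forall k, (1 <= k)%nat -> sumR (fun i => f (2 ^ k + i)%nat) (2 ^ k) <= B / INR k).
  { intros k Hk. pose proof (block_inv alpha c Hc Hb k p Hp) as Hbl.
    set (N := INR (2 ^ k)) in *.
    assert (HN : 0 < N) by (apply lt_0_INR, Nat.neq_0_lt_0, Nat.pow_nonzero; lia).
    assert (Hk' : 1 <= INR k) by (apply (le_INR 1); auto).
    apply Rle_trans with (sumR (fun i => / (N * INR k ^ 2) * / dist_nint (alpha * INR (2 ^ k + i))) (2 ^ k)).
    { apply sumR_le. intros i Hi. unfold f.
      set (x := (2 ^ k + i)%nat).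
      assert (Hx : N <= INR x) by (apply le_INR; lia).
      assert (Hl : INR k <= log2 (INR x)) by (apply log2_ge; auto).
      assert (Hd : 0 < dist_nint (alpha * INR x)).
      { assert (H1 := Hb x ltac:(unfold x; pose proof (Nat.pow_nonzero 2 k); lia)).
        rewrite Rmult_comm. pose proof (dist_nonneg (INR x * alpha)). destruct H; auto.
        rewrite <- H in H1. lra. }
      rewrite <- Rinv_mult. apply Rinv_le_contravar.
      apply Rmult_lt_0_compat; [|auto]. apply Rmult_lt_0_compat; [lra|]. apply pow_lt; lra.
      assert (INR k ^ 2 <= log2 (INR x) ^ 2) by (apply pow_incr; lra).
      assert (N * INR k ^ 2 <= INR x * log2 (INR x) ^ 2) by (apply Rmult_le_compat; try lra; apply pow_le; lra).
      replace (dist_nint (alpha * INR x) * INR x * log2 (INR x) ^ 2) with ((INR x * log2 (INR x) ^ 2) * dist_nint (alpha * INR x)) by ring.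
      apply Rmult_le_compat_r; lra. }
    rewrite sumR_scal.
    eapply Rle_trans. apply Rmult_le_compat_l. left; apply Rinv_0_lt_compat, Rmult_lt_0_compat; [lra| apply pow_lt; lra].
    apply Hbl. fold N. rewrite plus_INR.
    unfold B. apply Rle_trans with (4 * (INR k + INR p + 1) / (c * INR k ^ 2)).
    right. field. split; lra.
    apply my_le_div. apply Rmult_lt_0_compat; [lra| apply pow_lt; lra].
    replace (4 * (INR p + 2) / c / INR k * (c * INR k ^ 2)) with (4 * (INR p + 2) * INR k) by (field; lra).
    pose proof (pos_INR p). nra. }
  exists (5 * B). split. lra.
  intros q Hq. fold f.
  set (K := Nat.log2 q).
  destruct (Nat.log2_spec q ltac:(lia)) as [HK1 HK2]. fold K in HK1, HK2.
  assert (HK : (1 <= K)%nat). { destruct K. simpl in HK2. lia. lia. }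
  unfold sum_f. rewrite sumR_f_R0.
  assert (q ^ 3 < 2 ^ (K + (2 * K + 3)))%nat.
  { replace (K + (2 * K + 3))%nat with (S K * 3)%nat by lia. rewrite Nat.pow_mul_r.
    apply Nat.pow_lt_mono_l; lia. }
  assert (q <= q ^ 3)%nat by (simpl; nia).
  assert (2 ^ K <= 2 ^ (K + (2 * K + 3)))%nat by (apply Nat.pow_le_mono_r; lia).
  rewrite (sumR_ext _ (fun i => f (q + i)%nat)) by (intros; f_equal; lia).
  eapply Rle_trans. apply (sub_range f (2 ^ K) q _ (2 ^ (K + (2 * K + 3)) - 2 ^ K)); try lia.
  intros i _. apply fpos. pose proof (Nat.pow_nonzero 2 K); lia.
  rewrite dyadic.
  apply Rle_trans with (sumR (fun _ => B / INR K) (2 * K + 3)).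
  { apply sumR_le. intros s _. eapply Rle_trans. apply block. lia.
    apply Rmult_le_compat_l. lra. apply Rinv_le_contravar. apply (lt_INR 0); lia. apply le_INR; lia. }
  rewrite sumR_const.
  assert (Hk' : 1 <= INR K) by (apply (le_INR 1); auto).
  replace (INR (2 * K + 3)) with (2 * INR K + 3) by (rewrite plus_INR, mult_INR; simpl; ring).
  replace ((2 * INR K + 3) * (B / INR K)) with (B * (2 + 3 / INR K)) by (field; lra).
  assert (3 / INR K <= 3). { apply my_le_div; lra. }
  nra.
Qed.
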